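(* Let $R$ be a commutative ring, $S$ a subring of $R$, $I$ an ideal of $S$, $n\ge1$, and $f\in(T_n(R))[x]$. Then \[f\in\mathrm{Int}_{T_n(R)}(T_n(S),T_n(I))\iff f_{ij}\in\mathrm{Int}_R(T_{n-j+1}(S),T_{n-j+1}(I))\text{ for all }1\le i\le j\le n,\] and \[f\in\mathrm{Int}^{\ell}_{T_n(R)}(T_n(S),T_n(I))\iff f_{ij}\in\mathrm{Int}_R(T_{i}(S),T_{i}(I))\text{ for all }1\le i\le j\le n.\]
   Context: $T_n(A)$ denotes the ring of upper triangular $n\times n$ matrices over a ring $A$. For $f=\sum_k F_kx^k\in(T_n(R))[x]$ with $F_k\in T_n(R)$, right substitution is $f(C)=\sum_kF_kC^k$ and left substitution is $f(C)_\ell=\sum_kC^kF_k$. Writing $f_{ij}^{(k)}$ for the $(i,j)$-entry of $F_k$, set $f_{ij}=\sum_k f_{ij}^{(k)}x^k\in R[x]$ (so $f_{ij}=0$ for $i>j$). Definitions: $\mathrm{Int}_R(T_m(S),T_m(I))=\{g\in R[x]\mid \forall C\in T_m(S):\ g(C)\in T_m(I)\}$ (usual evaluation); $\mathrm{Int}_{T_n(R)}(T_n(S),T_n(I))=\{f\in(T_n(R))[x]\mid\forall C\in T_n(S):\ f(C)\in T_n(I)\}$; $\mathrm{Int}^{\ell}_{T_n(R)}(T_n(S),T_n(I))=\{f\in(T_n(R))[x]\mid\forall C\in T_n(S):\ f(C)_\ell\in T_n(I)\}$. *)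

(* Defs.v *)
From HB Require Import structures.
From mathcomp Require Import all_boot all_order all_algebra.
Set Implicit Arguments. Unset Strict Implicit. Unset Printing Implicit Defensive.
Import GRing.Theory.
Local Open Scope ring_scope.

Section Defs.
Variable R : comRingType.

Definition is_subring (S : {pred R}) : Prop :=
  1 \in S /\ (forall x y, x \in S -> y \in S -> x - y \in S) /\
  (forall x y, x \in S -> y \in S -> x * y \in S).

Definition is_ideal_of (S I : {pred R}) : Prop :=
  {subset I <= S} /\ 0 \in I /\
  (forall x y, x \in I -> y \in I -> x - y \in I) /\
  (forall s x, s \in S -> x \in I -> s * x \in I).

Definition upper_tri (m : nat) (A : 'M[R]_m) : Prop :=
  forall i j : 'I_m, (j < i)%N -> A i j = 0.

Definition in_T (m : nat) (P : {pred R}) (A : 'M[R]_m) : Prop :=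
  upper_tri A /\ forall i j : 'I_m, (i <= j)%N -> A i j \in P.

Definition mx_eval (m : nat) (g : {poly R}) (C : 'M[R]_m) : 'M[R]_m :=
  \sum_(k < size g) g`_k *: C ^+ k.

Definition Int_R (m : nat) (S I : {pred R}) (g : {poly R}) : Prop :=
  forall C : 'M[R]_m, in_T S C -> in_T I (mx_eval g C).

Definition rsubst (n : nat) (f : {poly 'M[R]_n.+1}) (C : 'M[R]_n.+1) :=
  \sum_(k < size f) f`_k * C ^+ k.

Definition lsubst (n : nat) (f : {poly 'M[R]_n.+1}) (C : 'M[R]_n.+1) :=
  \sum_(k < size f) C ^+ k * f`_k.

Definition poly_over_T (n : nat) (f : {poly 'M[R]_n.+1}) : Prop :=
  forall k, upper_tri f`_k.

Definition Int_T (n : nat) (S I : {pred R}) (f : {poly 'M[R]_n.+1}) : Prop :=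
  poly_over_T f /\ forall C, in_T S C -> in_T I (rsubst f C).

Definition Int_T_l (n : nat) (S I : {pred R}) (f : {poly 'M[R]_n.+1}) : Prop :=
  poly_over_T f /\ forall C, in_T S C -> in_T I (lsubst f C).

Definition entry_poly (n : nat) (f : {poly 'M[R]_n.+1}) (i j : 'I_n.+1) : {poly R} :=
  \poly_(k < size f) (f`_k i j).

End Defs.

(* Main.v *)
Require Import Defs.
From HB Require Import structures.
From mathcomp Require Import all_boot all_order all_algebra zify.
Set Implicit Arguments. Unset Strict Implicit. Unset Printing Implicit Defensive.
Import GRing.Theory.
Local Open Scope ring_scope.

Section Aux.
Variable R : comRingType.

Definition mget N (A : 'M[R]_N) (a b : nat) : R :=
  oapp (fun i : 'I_N => oapp (fun j : 'I_N => A i j) 0 (insub b)) 0 (insub a).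

Lemma mget_ord N (A : 'M[R]_N) (i j : 'I_N) : mget A i j = A i j.
Proof. by rewrite /mget !valK. Qed.

Lemma mget_out N (A : 'M[R]_N) a b : ~~ ((a < N) && (b < N))%N -> mget A a b = 0.
Proof.
rewrite negb_and /mget => /orP[] H.
  by rewrite (@insubF _ _ 'I_N a (negbTE H)).
rewrite (@insubF _ _ 'I_N b (negbTE H)); by case: (insub a : option 'I_N).
Qed.

Lemma mgetP N (A : 'M[R]_N) a b (P : R -> Prop) :
  P 0 -> (forall i j : 'I_N, val i = a -> val j = b -> P (A i j)) -> P (mget A a b).
Proof.
move=> P0 H; case: (boolP ((a < N) && (b < N))%N) => [/andP[Ha Hb]|Hn].
  have -> : a = val (Ordinal Ha) by []. have -> : b = val (Ordinal Hb) by [].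
  by rewrite mget_ord; apply: H.
by rewrite mget_out.
Qed.

Lemma mget_ut N (A : 'M[R]_N) a b : upper_tri A -> (b < a)%N -> mget A a b = 0.
Proof.
move=> HA hab; apply: (mgetP (P := fun x => x = 0)) => // i j ei ej; apply: HA; by rewrite ei ej.
Qed.

Lemma in_T_mget N (P : {pred R}) (A : 'M[R]_N) a b :
  in_T P A -> 0 \in P -> (a <= b)%N -> mget A a b \in P.
Proof.
move=> [_ HA] P0 hab; apply: (mgetP (P := fun x => x \in P)) => // i j ei ej.
by apply: HA; rewrite ei ej.
Qed.

Lemma mget_mul N (A B : 'M[R]_N) a b :
  mget (A * B) a b = \sum_(0 <= l < N) mget A a l * mget B l b.
Proof.
case: (boolP ((a < N) && (b < N))%N) => [/andP[Ha Hb]|Hn].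
  have -> : a = val (Ordinal Ha) by []. have -> : b = val (Ordinal Hb) by [].
  rewrite mget_ord -mulmxE mxE big_mkord; apply: eq_bigr => l _.
  by rewrite !mget_ord.
rewrite mget_out // big1 // => l _.
move: Hn; rewrite negb_and => /orP[] H.
  by rewrite (@mget_out N A a l) ?mul0r // negb_and H.
by rewrite (@mget_out N B l b) ?mulr0 // negb_and H orbT.
Qed.


Lemma mget_in N (A : 'M[R]_N) a b (Ha : (a < N)%N) (Hb : (b < N)%N) :
  mget A a b = A (Ordinal Ha) (Ordinal Hb).
Proof. by rewrite -mget_ord. Qed.

Lemma mget_add N (A B : 'M[R]_N) a b : mget (A + B) a b = mget A a b + mget B a b.
Proof.
case: (boolP ((a < N) && (b < N))%N) => [/andP[Ha Hb]|Hn].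
  by rewrite !(mget_in _ Ha Hb) mxE.
by rewrite !mget_out // addr0.
Qed.

Lemma mget_scale N (A : 'M[R]_N) c a b : mget (c *: A) a b = c * mget A a b.
Proof.
case: (boolP ((a < N) && (b < N))%N) => [/andP[Ha Hb]|Hn].
  by rewrite !(mget_in _ Ha Hb) mxE.
by rewrite !mget_out // mulr0.
Qed.

Lemma mget0 N a b : mget (0 : 'M[R]_N) a b = 0.
Proof. by apply: (mgetP (P := fun x => x = 0)) => // i j _ _; rewrite mxE. Qed.

Lemma sum_window (G : nat -> R) N off m : (off + m <= N)%N ->
  (forall l, (l < off)%N -> G l = 0) -> (forall l, (off + m <= l)%N -> G l = 0) ->
  \sum_(0 <= l < N) G l = \sum_(l < m) G (off + l).
Proof.
move=> hN h1 h2.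
rewrite (big_cat_nat _ (n:=off)) //=; last by apply: leq_trans hN; apply: leq_addr.
rewrite [X in X + _]big1_seq ?add0r; last first.
  by move=> l /andP[_]; rewrite mem_index_iota => /andP[_ ?]; apply: h1.
rewrite (big_cat_nat _ (n:=off+m)) //=; last by apply: leq_addr.
rewrite [X in _ + X]big1_seq ?addr0; last first.
  by move=> l /andP[_]; rewrite mem_index_iota => /andP[? _]; apply: h2.
rewrite -{1}(add0n off) big_addn addKn big_mkord; apply: eq_bigr => i _.
by rewrite addnC.
Qed.

Definition upper_tri' N (A : 'M[R]_N) := upper_tri A.

Lemma ut_mul N (A B : 'M[R]_N) : upper_tri A -> upper_tri B -> upper_tri (A * B).
Proof.
move=> hA hB i j hij; rewrite -mulmxE mxE big1 // => l _.
case: (ltnP l i) => hl; first by rewrite hA ?mul0r.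
by rewrite hB ?mulr0 //; apply: leq_trans hij hl.
Qed.

Lemma ut_1 N : upper_tri (1 : 'M[R]_N).
Proof. by move=> i j hij; rewrite mxE; case: eqP => // e; move: hij; rewrite e ltnn. Qed.

Lemma ut_exp N (A : 'M[R]_N) k : upper_tri A -> upper_tri (A ^+ k).
Proof. by move=> hA; elim: k => [|k IH]; [rewrite expr0; apply: ut_1|rewrite exprS; apply: ut_mul]. Qed.

Lemma ut_add N (A B : 'M[R]_N) : upper_tri A -> upper_tri B -> upper_tri (A + B).
Proof. by move=> hA hB i j hij; rewrite mxE hA ?hB ?addr0. Qed.

Lemma ut_0 N : upper_tri (0 : 'M[R]_N).
Proof. by move=> i j _; rewrite mxE. Qed.

Lemma ut_scale N (A : 'M[R]_N) c : upper_tri A -> upper_tri (c *: A).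
Proof. by move=> hA i j hij; rewrite mxE hA ?mulr0. Qed.

Lemma ut_sum N (I : Type) (r : seq I) (F : I -> 'M[R]_N) :
  (forall i, upper_tri (F i)) -> upper_tri (\sum_(i <- r) F i).
Proof.
move=> h; apply: (big_ind (fun A => upper_tri A)); [exact: ut_0|exact: ut_add|].
by move=> i _; apply: h.
Qed.

Lemma ut_mx_eval N (g : {poly R}) (C : 'M[R]_N) : upper_tri C -> upper_tri (mx_eval g C).
Proof. by move=> hC; apply: ut_sum => k; apply: ut_scale; apply: ut_exp. Qed.

Definition sub N off m (A : 'M[R]_N) : 'M[R]_m := \matrix_(x, y) mget A (off + x) (off + y).

Lemma mget_sub N off m (A : 'M[R]_N) (x y : 'I_m) : (sub off m A) x y = mget A (off + x) (off + y).
Proof. by rewrite mxE. Qed.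

Lemma sub_add N off m (A B : 'M[R]_N) : sub off m (A + B) = sub off m A + sub off m B.
Proof. by apply/matrixP => x y; rewrite !mxE mget_add. Qed.

Lemma sub_scale N off m (A : 'M[R]_N) c : sub off m (c *: A) = c *: sub off m A.
Proof. by apply/matrixP => x y; rewrite !mxE mget_scale. Qed.

Lemma sub_0 N off m : sub off m (0 : 'M[R]_N) = 0.
Proof. by apply/matrixP => x y; rewrite !mxE mget0. Qed.

Lemma sub_1 N off m : (off + m <= N)%N -> sub off m (1 : 'M[R]_N) = 1.
Proof.
move=> hN; apply/matrixP => x y.
have hx : (off + x < N)%N by apply: leq_trans hN; rewrite ltn_add2l.
have hy : (off + y < N)%N by apply: leq_trans hN; rewrite ltn_add2l.
rewrite mxE (mget_in _ hx hy) !mxE.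
by congr (_%:R); rewrite -val_eqE /= eqn_add2l.
Qed.

Lemma sub_mul N off m (A B : 'M[R]_N) : (off + m <= N)%N -> upper_tri A -> upper_tri B ->
  sub off m (A * B) = sub off m A * sub off m B.
Proof.
move=> hN hA hB; apply/matrixP => x y.
rewrite [RHS]/= -mulmxE !mxE mget_mul (@sum_window _ _ off m hN).
- by apply: eq_bigr => l _; rewrite !mxE.
- move=> l hl; rewrite mget_ut ?mul0r //; apply: leq_trans hl _; apply: leq_addr.
- move=> l hl; rewrite (@mget_ut N B) ?mulr0 //; apply: leq_trans hl.
  by rewrite ltn_add2l.
Qed.

Lemma sub_exp N off m (A : 'M[R]_N) k : (off + m <= N)%N -> upper_tri A ->
  sub off m (A ^+ k) = (sub off m A) ^+ k.
Proof.
move=> hN hA; elim: k => [|k IH]; first by rewrite !expr0 sub_1.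
by rewrite !exprS sub_mul ?IH //; apply: ut_exp.
Qed.

Lemma sub_sum N off m (I : Type) (r : seq I) (F : I -> 'M[R]_N) :
  sub off m (\sum_(i <- r) F i) = \sum_(i <- r) sub off m (F i).
Proof. by apply: (big_morph _ (@sub_add N off m) (sub_0 N off m)). Qed.

Lemma sub_mx_eval N off m (g : {poly R}) (C : 'M[R]_N) : (off + m <= N)%N -> upper_tri C ->
  sub off m (mx_eval g C) = mx_eval g (sub off m C).
Proof.
move=> hN hC; rewrite /mx_eval sub_sum; apply: eq_bigr => k _.
by rewrite sub_scale sub_exp.
Qed.

Lemma in_T_sub N off m (P : {pred R}) (A : 'M[R]_N) : in_T P A -> 0 \in P ->
  in_T P (sub off m A).
Proof.
move=> hA P0; split.
  by move=> x y hxy; rewrite mxE mget_ut //; [case: hA|rewrite ltn_add2l].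
by move=> x y hxy; rewrite mxE; apply: in_T_mget; rewrite ?leq_add2l.
Qed.

Definition emb N off M (A : 'M[R]_M) : 'M[R]_N :=
  \matrix_(i, j) if (off <= i)%N && (off <= j)%N then mget A (i - off) (j - off) else 0.

Lemma in_T_emb N off M (P : {pred R}) (A : 'M[R]_M) : in_T P A -> 0 \in P ->
  in_T P (emb N off A).
Proof.
move=> hA P0; split.
  move=> i j hij; rewrite mxE; case: andP => // -[hi hj].
  rewrite mget_ut //; first by case: hA.
  by rewrite ltn_sub2rE.
move=> i j hij; rewrite mxE; case: andP => // -[hi hj].
by apply: in_T_mget; rewrite ?leq_sub2r.
Qed.

Lemma sub_emb N off M (A : 'M[R]_M) : (off + M <= N)%N -> sub off M (emb N off A) = A.
Proof.
move=> hN; apply/matrixP => x y.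
have hx : (off + x < N)%N by apply: leq_trans hN; rewrite ltn_add2l.
have hy : (off + y < N)%N by apply: leq_trans hN; rewrite ltn_add2l.
by rewrite mxE (mget_in _ hx hy) mxE /= !leq_addr /= !addKn mget_ord.
Qed.

Lemma emb_row0 N off M (A : 'M[R]_M) (i j : 'I_N) : (i < off)%N -> (emb N off A) i j = 0.
Proof. by move=> hi; rewrite mxE leqNgt hi. Qed.

Lemma mx_evalE N (g : {poly R}) (C : 'M[R]_N) a b :
  (mx_eval g C) a b = \sum_(k < size g) g`_k * (C ^+ k) a b.
Proof. by rewrite /mx_eval summxE; apply: eq_bigr => k _; rewrite mxE. Qed.

Lemma mx_eval_row0 N (g : {poly R}) (C : 'M[R]_N) (r j : 'I_N) :
  (forall t, C r t = 0) -> r != j -> (mx_eval g C) r j = 0.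
Proof.
move=> h hrj; rewrite mx_evalE big1 // => -[[|k] hk] _ /=.
  by rewrite expr0 mxE (negbTE hrj) mulr0.
by rewrite exprS -mulmxE mxE big1 ?mulr0 // => l _; rewrite h mul0r.
Qed.


Lemma mget_sub' N off m (A : 'M[R]_N) x y : (x < m)%N -> (y < m)%N ->
  mget (sub off m A) x y = mget A (off + x) (off + y).
Proof. by move=> hx hy; rewrite (mget_in _ hx hy) mxE. Qed.

Lemma row0_Int m (g : {poly R}) (S I : {pred R}) : 0 \in S -> 0 \in I ->
  (forall C : 'M[R]_m, in_T S C -> forall y, mget (mx_eval g C) 0 y \in I) -> Int_R m S I g.
Proof.
move=> hS hI H C hC; split; first by apply: ut_mx_eval; case: hC.
move=> a b hab.
have ha : (a < m)%N := ltn_ord a.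
have hb : (b < m)%N := ltn_ord b.
have h1 : (a + (m - a) <= m)%N by rewrite subnKC // ltnW.
have h2 : (0 + (m - a) <= m)%N by rewrite add0n leq_subr.
have hC1 := in_T_sub a (m - a)%N hC hS.
have hC2 := in_T_emb m 0 hC1 hS.
have := H _ hC2 (b - a)%N.
have e0 : (0 < m - a)%N by rewrite subn_gt0.
have e1 : (b - a < m - a)%N by rewrite ltn_sub2r.
have E : mget (mx_eval g C) a b =
    mget (mx_eval g (emb m 0 (sub a (m - a)%N C))) 0 (b - a)%N.
  transitivity (mget (sub 0 (m - a)%N (mx_eval g (emb m 0 (sub a (m - a)%N C)))) 0 (b - a)%N);
    last by rewrite mget_sub'.
  rewrite sub_mx_eval //; last by case: hC2.
  rewrite sub_emb // -sub_mx_eval //; last by case: hC.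
  by rewrite mget_sub' // addn0 subnKC.
by rewrite -mget_ord E.
Qed.


Lemma entry_poly_coef n (f : {poly 'M[R]_n.+1}) i j k : (entry_poly f i j)`_k = f`_k i j.
Proof. by rewrite coef_poly; case: ltnP => // h; rewrite nth_default // mxE. Qed.

Lemma mx_eval_widen m (g : {poly R}) (C : 'M[R]_m) K : (size g <= K)%N ->
  mx_eval g C = \sum_(k < K) g`_k *: C ^+ k.
Proof.
move=> hK; rewrite /mx_eval (big_ord_widen K (fun k => g`_k *: C ^+ k)) // big_mkcond.
by apply: eq_bigr => k _; case: ltnP => // h; rewrite nth_default // scale0r.
Qed.

Lemma rsubstE n (f : {poly 'M[R]_n.+1}) C i j :
  (rsubst f C) i j = \sum_(l < n.+1) (mx_eval (entry_poly f i l) C) l j.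
Proof.
rewrite /rsubst summxE.
under eq_bigr do rewrite -mulmxE mxE.
under [RHS]eq_bigr => l _ do rewrite (mx_eval_widen _ (size_poly _ _)) summxE.
rewrite exchange_big; apply: eq_bigr => k _; apply: eq_bigr => l _.
by rewrite mxE entry_poly_coef.
Qed.

Section Ideal.
Variables (S I : {pred R}).
Hypothesis hS : is_subring S.
Hypothesis hI : is_ideal_of S I.

Lemma S0 : 0 \in S.
Proof. by case: hS => h1 [h2 _]; rewrite -(subrr 1); apply: h2. Qed.

Lemma I0 : 0 \in I.
Proof. by case: hI => _ []. Qed.

Lemma Isub x y : x \in I -> y \in I -> x - y \in I.
Proof. by case: hI => _ [_ [h _]]; apply: h. Qed.

Lemma Iadd x y : x \in I -> y \in I -> x + y \in I.
Proof.
move=> hx hy; rewrite -[y]opprK -[- y]add0r; apply: Isub => //.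
exact: Isub I0 hy.
Qed.

Lemma Isum (J : finType) (P : pred J) (F : J -> R) :
  (forall j, P j -> F j \in I) -> \sum_(j | P j) F j \in I.
Proof. by move=> h; apply: (big_ind (fun x => x \in I)); [exact: I0|exact: Iadd|]. Qed.

Lemma entry_from_Int N (g : {poly R}) (C : 'M[R]_N) (l j : 'I_N) :
  in_T S C -> Int_R (N - l) S I g -> (l <= j)%N -> (mx_eval g C) l j \in I.
Proof.
move=> hC hg hlj.
have hl := ltn_ord l; have hj := ltn_ord j.
have h1 : (l + (N - l) <= N)%N by rewrite subnKC // ltnW.
have := in_T_mget (a:=0%N) (b:=(j - l)%N) (hg _ (in_T_sub l (N - l)%N hC S0)) I0 (leq0n _).
rewrite -sub_mx_eval //; last by case: hC.
by rewrite mget_sub' ?subn_gt0 ?ltn_sub2r // addn0 subnKC // mget_ord.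
Qed.



Lemma ut_rsubst n (f : {poly 'M[R]_n.+1}) C : poly_over_T f -> upper_tri C ->
  upper_tri (rsubst f C).
Proof.
move=> hf hC; apply: ut_sum => k; apply: ut_mul; [exact: hf|exact: ut_exp].
Qed.

Lemma right_step n (f : {poly 'M[R]_n.+1}) (l : 'I_n.+1) :
  poly_over_T f -> (forall C, in_T S C -> in_T I (rsubst f C)) ->
  (forall l' : 'I_n.+1, (l < l')%N -> forall i : 'I_n.+1, (i <= l')%N ->
      Int_R (n.+1 - l') S I (entry_poly f i l')) ->
  forall i : 'I_n.+1, (i <= l)%N -> Int_R (n.+1 - l) S I (entry_poly f i l).
Proof.
move=> hf HT IHl i hil; apply: row0_Int; [exact: S0|exact: I0|].
move=> C' hC' y.
have hl := ltn_ord l.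
case: (ltnP y (n.+1 - l)) => hy; last first.
  by rewrite mget_out ?I0 // negb_and; apply/orP; right; rewrite -leqNgt.
have hC := in_T_emb n.+1 l hC' S0.
have hj : (l + y < n.+1)%N by rewrite -ltn_subRL.
set j := Ordinal hj.
have hij : (i <= j)%N by apply: leq_trans hil _; apply: leq_addr.
have := (HT _ hC).2 i j hij.
rewrite rsubstE (bigD1 l) //=.
have Hrest : \sum_(l' < n.+1 | l' != l) (mx_eval (entry_poly f i l') (emb n.+1 l C')) l' j \in I.
  apply: Isum => l' hl'.
  case: (ltnP l' l) => h1.
    rewrite mx_eval_row0 ?I0 // => [t|]; first by rewrite emb_row0.
    apply/eqP => e; move: h1; rewrite e /= ltnNge leq_addr.
    done.
  have h2 : (l < l')%N by rewrite ltn_neqAle eq_sym hl' h1.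
  case: (ltnP j l') => h3.
    by rewrite (ut_mx_eval _ hC.1) ?I0.
  apply: (entry_from_Int hC _ h3); apply: IHl => //.
  by apply: leq_trans hil (ltnW h2).
move=> Hsum.
have := Isub Hsum Hrest; rewrite addrK.
have e : (l + (n.+1 - l) <= n.+1)%N by rewrite subnKC // ltnW.
rewrite -mget_ord /= -[X in mget _ X _]addn0 -(@mget_sub' _ _ (n.+1 - l)%N) ?subn_gt0 //.
by rewrite sub_mx_eval ?sub_emb //; case: hC.
Qed.

Lemma right_thm n (f : {poly 'M[R]_n.+1}) : poly_over_T f ->
  (Int_T S I f <->
     (forall i j : 'I_n.+1, (i <= j)%N -> Int_R (n.+1 - j) S I (entry_poly f i j))).
Proof.
move=> hf; split.
  case=> _ HT.
  suff K : forall d (l : 'I_n.+1), (n - l <= d)%N -> forall i : 'I_n.+1, (i <= l)%N ->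
      Int_R (n.+1 - l) S I (entry_poly f i l).
    by move=> i j hij; apply: (K n) => //; apply: leq_subr.
  elim=> [|d IH] l hl; apply: right_step => // l' hll'.
    have := ltn_ord l'; rewrite ltnS => h.
    by move: hl; rewrite leqn0 subn_eq0 => h'; have := leq_ltn_trans h' hll'; rewrite ltnNge h.
  apply: IH; rewrite -ltnS; apply: leq_trans hl.
  have h' : (l < n)%N by apply: leq_trans hll' _; rewrite -ltnS.
  by apply: ltn_sub2l.
move=> H; split => // C hC; split; first by apply: ut_rsubst => //; case: hC.
move=> i j hij; rewrite rsubstE; apply: Isum => l _.
case: (ltnP l i) => h1.
  by rewrite mx_evalE big1 ?I0 // => k _; rewrite entry_poly_coef hf ?mul0r.
case: (ltnP j l) => h2; first by rewrite (ut_mx_eval _ hC.1) ?I0.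
by apply: (entry_from_Int hC _ h2); apply: H.
Qed.

End Ideal.


Lemma rev_le N (i j : 'I_N) : (rev_ord i <= rev_ord j)%N = (j <= i)%N.
Proof. rewrite /=; have := ltn_ord i; have := ltn_ord j; lia. Qed.
Lemma rev_lt N (i j : 'I_N) : (rev_ord i < rev_ord j)%N = (j < i)%N.
Proof. rewrite /=; have := ltn_ord i; have := ltn_ord j; lia. Qed.
Lemma rev_sub N (i : 'I_N) : (N - rev_ord i = i.+1)%N.
Proof. rewrite /=; have := ltn_ord i; lia. Qed.

Definition tau N (A : 'M[R]_N) : 'M[R]_N := \matrix_(i, j) A (rev_ord j) (rev_ord i).

Lemma tauK N : involutive (@tau N).
Proof. by move=> A; apply/matrixP => i j; rewrite !mxE !rev_ordK. Qed.

Lemma tau_add N (A B : 'M[R]_N) : tau (A + B) = tau A + tau B.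
Proof. by apply/matrixP => i j; rewrite !mxE. Qed.

Lemma tau_0 N : tau (0 : 'M[R]_N) = 0.
Proof. by apply/matrixP => i j; rewrite !mxE. Qed.

Lemma tau_1 N : tau (1 : 'M[R]_N) = 1.
Proof. by apply/matrixP => i j; rewrite !mxE (inj_eq rev_ord_inj) eq_sym. Qed.

Lemma tau_mul N (A B : 'M[R]_N) : tau (A * B) = tau B * tau A.
Proof.
apply/matrixP => i j; rewrite -!mulmxE !mxE (reindex_inj rev_ord_inj).
by apply: eq_bigr => l _; rewrite !mxE mulrC.
Qed.

Lemma tau_exp N (A : 'M[R]_N) k : tau (A ^+ k) = tau A ^+ k.
Proof.
elim: k => [|k IH]; first by rewrite !expr0 tau_1.
by rewrite exprS tau_mul IH exprSr.
Qed.

Lemma tau_sum N (I : Type) (r : seq I) (F : I -> 'M[R]_N) :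
  tau (\sum_(i <- r) F i) = \sum_(i <- r) tau (F i).
Proof. by apply: (big_morph _ (@tau_add N) (tau_0 N)). Qed.

Lemma ut_tau N (A : 'M[R]_N) : upper_tri A -> upper_tri (tau A).
Proof. by move=> hA i j hij; rewrite mxE hA // rev_lt. Qed.

Lemma in_T_tau N P (A : 'M[R]_N) : in_T P A -> in_T P (tau A).
Proof.
case=> hA hP; split; first exact: ut_tau.
by move=> i j hij; rewrite mxE hP // rev_le.
Qed.

Definition ftau n (f : {poly 'M[R]_n.+1}) := map_poly (@tau n.+1) f.

Lemma ftau_coef n (f : {poly 'M[R]_n.+1}) k : (ftau f)`_k = tau f`_k.
Proof. by rewrite coef_map_id0 // tau_0. Qed.

Lemma ftau_size n (f : {poly 'M[R]_n.+1}) : size (ftau f) = size f.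
Proof. by rewrite size_map_inj_poly // ?tau_0 //; apply: can_inj (@tauK _). Qed.

Lemma lsubst_tau n (f : {poly 'M[R]_n.+1}) C :
  lsubst f C = tau (rsubst (ftau f) (tau C)).
Proof.
rewrite /rsubst tau_sum ftau_size /lsubst; apply: eq_bigr => k _.
by rewrite tau_mul tau_exp !tauK ftau_coef tauK.
Qed.

Lemma entry_poly_tau n (f : {poly 'M[R]_n.+1}) i j :
  entry_poly (ftau f) i j = entry_poly f (rev_ord j) (rev_ord i).
Proof.
by apply/polyP => k; rewrite !entry_poly_coef ftau_coef mxE.
Qed.


Lemma rev_S N (i : 'I_N) : ((rev_ord i).+1 = N - i)%N.
Proof. rewrite /=; have := ltn_ord i; lia. Qed.

End Aux.

Unset Implicit Arguments.

Theorem theorem4p2 (R : comRingType) (S I : {pred R}) (n : nat)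
  (f : {poly 'M[R]_n.+1}) :
  is_subring S -> is_ideal_of S I -> poly_over_T f ->
  (Int_T S I f <->
     (forall i j : 'I_n.+1, (i <= j)%N -> Int_R (n.+1 - j) S I (entry_poly f i j)))
  /\
  (Int_T_l S I f <->
     (forall i j : 'I_n.+1, (i <= j)%N -> Int_R i.+1 S I (entry_poly f i j))).
Proof.
move=> hS hI hf; split; first exact: right_thm.
have hf' : poly_over_T (ftau f) by move=> k; rewrite ftau_coef; apply: ut_tau.
have E : Int_T_l S I f <-> Int_T S I (ftau f).
  split => -[_ H]; split => // C hC.
    by have := in_T_tau (H _ (in_T_tau hC)); rewrite lsubst_tau !tauK.
  by rewrite lsubst_tau; apply: in_T_tau; apply: H; apply: in_T_tau.
rewrite E (right_thm hS hI hf'); split => H i j hij.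
  have := H (rev_ord j) (rev_ord i); rewrite rev_le rev_sub entry_poly_tau !rev_ordK.
  by apply.
have := H (rev_ord j) (rev_ord i); rewrite rev_le rev_S entry_poly_tau.
by apply.
Qed.
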